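(* Let $k$ be a field of characteristic $0$ and let $\mathcal L$ be an fgc centreless Lie torus of type $(\Delta,\Lambda)$ over $k$ with centroid $C$ and $\Gamma=\Gamma(\mathcal L)$. Let $\lambda_1=0,\lambda_2,\dots,\lambda_m$ be a list of representatives of the cosets of $\Gamma$ in $\Lambda$; for $\alpha\in\Delta$ and $1\le i\le m$ let $B_\alpha^i$ be a (finite) $k$-basis of $\mathcal L_\alpha^{\lambda_i}$; put $B_\alpha=\bigcup_{i=1}^m B_\alpha^i$ and $B=\bigcup_{\alpha\in\Delta}B_\alpha$. Then: (i) for each $\alpha\in Q$, $\mathcal L_\alpha$ is a $C$-submodule of $\mathcal L$ and $B_\alpha$ is a $\Lambda$-homogeneous $C$-basis of $\mathcal L_\alpha$; hence $\mathcal L_\alpha$ is a free $C$-module of finite rank; (ii) $B$ is a $Q\times\Lambda$-homogeneous $C$-basis of $\mathcal L$; hence $\mathcal L$ is a free $C$-module of finite rank.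
   Context: An irreducible finite root system in a finite-dimensional $k$-vector space is a finite subset $\Delta$ containing $0$ with $\Delta^\times:=\Delta\setminus\{0\}$ an irreducible (possibly non-reduced) finite root system in the usual sense; $Q=\mathrm{span}_{\mathbb Z}(\Delta)$, $\alpha^\vee$ the coroot of $\alpha\in\Delta^\times$, $\Delta^\times_{\mathrm{ind}}=\Delta^\times\setminus2\Delta^\times$. Let $\Lambda$ be a finitely generated free abelian group. A Lie torus of type $(\Delta,\Lambda)$ is a Lie algebra $\mathcal L$ over $k$ with a $Q\times\Lambda$-grading $\mathcal L=\bigoplus\mathcal L_\alpha^\lambda$ ($\mathcal L_\alpha:=\bigoplus_\lambda\mathcal L_\alpha^\lambda$, $\mathcal L^\lambda:=\bigoplus_\alpha\mathcal L_\alpha^\lambda$) such that: (LT1) $\{\alpha:\mathcal L_\alpha\neq0\}=\Delta$; (LT2)(i) $\mathcal L_\alpha^0\neq0$ for $\alpha\in\Delta^\times_{\mathrm{ind}}$; (ii) whenever $\alpha\in\Delta^\times$ and $\mathcal L_\alpha^\lambda\ne0$ there are $e\in\mathcal L_\alpha^\lambda$, $f\in\mathcal L_{-\alpha}^{-\lambda}$ with $\mathcal L_\alpha^\lambda=ke$, $\mathcal L_{-\alpha}^{-\lambda}=kf$, $[[e,f],x]=\langle\beta,\alpha^\vee\rangle x$ for $x\in\mathcal L_\beta$, $\beta\in Q$; (LT3) $\mathcal L$ is generated by the $\mathcal L_\alpha$, $\alpha\in\Delta^\times$; (LT4) $\Lambda$ is generated by $\{\lambda:\mathcal L^\lambda\ne0\}$.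 The centroid is $C=\{c\in\mathrm{End}_k(\mathcal L):c[x,y]=[cx,y]=[x,cy]\ \forall x,y\}$; $\mathcal L$ is fgc if it is finitely generated as a $C$-module, and centreless if its centre is $0$. For $\lambda\in\Lambda$ let $C^\lambda=\{c\in C: c(\mathcal L^\mu)\subseteq\mathcal L^{\mu+\lambda}\ \forall\mu\}$; then $C=\bigoplus_\lambda C^\lambda$, and $\Gamma(\mathcal L):=\{\lambda: C^\lambda\neq0\}$ is a subgroup of $\Lambda$. For $\mathcal L$ fgc centreless it is known that $\Lambda/\Gamma$ is finite and each $\mathcal L^\lambda$ is finite-dimensional. *)

(* Defs.v *)
From HB Require Import structures.
From mathcomp Require Import all_boot all_order all_algebra.
Set Implicit Arguments. Unset Strict Implicit. Unset Printing Implicit Defensive.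
Import GRing.Theory Num.Theory.
Local Open Scope ring_scope.

(* Lambda is modelled as Z^n = 'rV[int]_n (any f.g. free abelian group is one).
   Subspaces / graded pieces of the (possibly infinite-dimensional) algebra L
   are Prop-valued predicates on L. *)

Definition is_subspace (k : fieldType) (L : lmodType k) (S : L -> Prop) : Prop :=
  S 0 /\ (forall (a : k) x y, S x -> S y -> S (a *: x + y)).

Definition is_lie_algebra (k : fieldType) (L : lmodType k) (br : L -> L -> L) : Prop :=
  (forall (a : k) x y z, br (a *: x + y) z = a *: br x z + br y z) /\
  (forall (a : k) x y z, br z (a *: x + y) = a *: br z x + br z y) /\
  (forall x, br x x = 0) /\
  (forall x y z, br x (br y z) + br y (br z x) + br z (br x y) = 0).

Definition nonzero_roots (k : fieldType) (V : vectType k) (D : seq V) : seq V :=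
  [seq a <- D | a != 0].

(* Delta (a duplicate-free list containing 0) is an irreducible finite root system
   (possibly non-reduced) in V, with coroots cor a : V -> k for a in Delta^x. *)
Definition is_irred_root_system (k : fieldType) (V : vectType k) (D : seq V)
    (cor : V -> V -> k) : Prop :=
  uniq D /\ 0 \in D /\ (<<D>>%VS = fullv) /\
  (forall a, a \in nonzero_roots D ->
     (forall (c : k) x y, cor a (c *: x + y) = c * cor a x + cor a y) /\
     cor a a = 2 /\
     (forall b, b \in D -> b - cor a b *: a \in D) /\
     (forall b, b \in D -> exists z : int, cor a b = z%:~R)) /\
  nonzero_roots D != [::] /\
  (forall P : pred V,
     (forall a b, a \in nonzero_roots D -> b \in nonzero_roots D ->
        P a -> ~~ P b -> cor a b = 0) ->
     all P (nonzero_roots D) || all (predC P) (nonzero_roots D)).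

Definition inQ (k : fieldType) (V : vectType k) (D : seq V) (a : V) : Prop :=
  exists z : 'I_(size D) -> int, a = \sum_(i < size D) (D`_i) *~ (z i).

(* A grading by (a subset of) V x Lambda: G a l = the piece L_a^l. *)
Definition is_graded (k : fieldType) (V : vectType k) (L : lmodType k) (n : nat)
    (br : L -> L -> L) (G : V -> 'rV[int]_n -> L -> Prop) : Prop :=
  (forall a l, is_subspace (G a l)) /\
  (forall x : L, exists (s : seq (V * 'rV[int]_n)) (f : V * 'rV[int]_n -> L),
      (forall p, G p.1 p.2 (f p)) /\ x = \sum_(p <- s) f p) /\
  (forall (s : seq (V * 'rV[int]_n)) (f : V * 'rV[int]_n -> L), uniq s ->
      (forall p, G p.1 p.2 (f p)) -> \sum_(p <- s) f p = 0 ->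
      forall p, p \in s -> f p = 0) /\
  (forall a b l m x y, G a l x -> G b m y -> G (a + b) (l + m) (br x y)).

Definition Lroot (k : fieldType) (V : vectType k) (L : lmodType k) (n : nat)
    (G : V -> 'rV[int]_n -> L -> Prop) (a : V) (x : L) : Prop :=
  exists (s : seq 'rV[int]_n) (f : 'rV[int]_n -> L),
    (forall l, G a l (f l)) /\ x = \sum_(l <- s) f l.

Definition Ldeg (k : fieldType) (V : vectType k) (L : lmodType k) (n : nat)
    (G : V -> 'rV[int]_n -> L -> Prop) (l : 'rV[int]_n) (x : L) : Prop :=
  exists (s : seq V) (f : V -> L), (forall a, G a l (f a)) /\ x = \sum_(a <- s) f a.

Definition is_Lie_torus (k : fieldType) (V : vectType k) (L : lmodType k) (n : nat)
    (br : L -> L -> L) (G : V -> 'rV[int]_n -> L -> Prop) (D : seq V)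
    (cor : V -> V -> k) : Prop :=
  is_lie_algebra br /\ is_irred_root_system D cor /\ is_graded br G /\
  (forall a, (exists x, Lroot G a x /\ x <> 0) <-> a \in D) /\
  (forall a, a \in nonzero_roots D ->
     (forall b, b \in nonzero_roots D -> a != b *+ 2) ->
     exists x, G a 0 x /\ x <> 0) /\
  (forall a l, a \in nonzero_roots D -> (exists x, G a l x /\ x <> 0) ->
     exists e f, G a l e /\ G (- a) (- l) f /\
       (forall x, G a l x <-> exists c : k, x = c *: e) /\
       (forall x, G (- a) (- l) x <-> exists c : k, x = c *: f) /\
       (forall b x, inQ D b -> Lroot G b x -> br (br e f) x = cor a b *: x)) /\
  (forall S : L -> Prop, is_subspace S -> (forall x y, S x -> S y -> S (br x y)) ->
     (forall a x, a \in nonzero_roots D -> Lroot G a x -> S x) -> forall x, S x) /\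
  (forall H : 'rV[int]_n -> Prop, H 0 -> (forall l m, H l -> H m -> H (l - m)) ->
     (forall l, (exists x, Ldeg G l x /\ x <> 0) -> H l) -> forall l, H l).

Definition in_centroid (k : fieldType) (L : lmodType k) (br : L -> L -> L)
    (c : L -> L) : Prop :=
  (forall (a : k) x y, c (a *: x + y) = a *: c x + c y) /\
  (forall x y, c (br x y) = br (c x) y) /\
  (forall x y, c (br x y) = br x (c y)).

Definition fgc (k : fieldType) (L : lmodType k) (br : L -> L -> L) : Prop :=
  exists s : seq L, forall x : L, exists cs : 'I_(size s) -> L -> L,
    (forall i, in_centroid br (cs i)) /\ x = \sum_(i < size s) cs i s`_i.

Definition centreless (k : fieldType) (L : lmodType k) (br : L -> L -> L) : Prop :=
  forall z : L, (forall x, br z x = 0) -> z = 0.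

Definition in_Cdeg (k : fieldType) (V : vectType k) (L : lmodType k) (n : nat)
    (br : L -> L -> L) (G : V -> 'rV[int]_n -> L -> Prop) (l : 'rV[int]_n)
    (c : L -> L) : Prop :=
  in_centroid br c /\ forall m x, Ldeg G m x -> Ldeg G (m + l) (c x).

Definition in_Gamma (k : fieldType) (V : vectType k) (L : lmodType k) (n : nat)
    (br : L -> L -> L) (G : V -> 'rV[int]_n -> L -> Prop) (l : 'rV[int]_n) : Prop :=
  exists c, in_Cdeg br G l c /\ exists x, c x <> 0.

(* reps = lambda_1 = 0, ..., lambda_{m+1}: a set of coset representatives *)
Definition coset_reps (k : fieldType) (V : vectType k) (L : lmodType k) (n : nat)
    (br : L -> L -> L) (G : V -> 'rV[int]_n -> L -> Prop) (m : nat)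
    (reps : 'I_m.+1 -> 'rV[int]_n) : Prop :=
  reps ord0 = 0 /\
  (forall l, exists i, in_Gamma br G (l - reps i)) /\
  (forall i j, in_Gamma br G (reps i - reps j) -> i = j).

Definition k_basis (k : fieldType) (L : lmodType k) (M : L -> Prop) (s : seq L) : Prop :=
  (forall b, b \in s -> M b) /\
  (forall x, M x -> exists c : 'I_(size s) -> k, x = \sum_(i < size s) c i *: s`_i) /\
  (forall c : 'I_(size s) -> k, \sum_(i < size s) c i *: s`_i = 0 -> forall i, c i = 0).

Definition centroid_basis (k : fieldType) (L : lmodType k) (br : L -> L -> L)
    (M : L -> Prop) (s : seq L) : Prop :=
  (forall b, b \in s -> M b) /\
  (forall x, M x -> exists cs : 'I_(size s) -> L -> L,
      (forall i, in_centroid br (cs i)) /\ x = \sum_(i < size s) cs i s`_i) /\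
  (forall cs : 'I_(size s) -> L -> L, (forall i, in_centroid br (cs i)) ->
      \sum_(i < size s) cs i s`_i = 0 -> forall i y, cs i y = 0).

Definition Balpha (k : fieldType) (V : vectType k) (L : lmodType k) (m : nat)
    (D : seq V) (Bs : V -> 'I_m.+1 -> seq L) (a : V) : seq L :=
  if a \in D then flatten [seq Bs a i | i <- enum 'I_m.+1] else [::].

Definition Ball (k : fieldType) (V : vectType k) (L : lmodType k) (m : nat)
    (D : seq V) (Bs : V -> 'I_m.+1 -> seq L) : seq L :=
  flatten [seq Balpha D Bs a | a <- D].

(* Main.v *)
Require Import Defs.
From HB Require Import structures.
From mathcomp Require Import all_boot all_order all_algebra.
From Stdlib Require Import Classical ClassicalEpsilon.
From mathcomp Require Import ring.
Import GRing.Theory Num.Theory.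
Local Open Scope ring_scope.
Set Implicit Arguments. Unset Strict Implicit. Unset Printing Implicit Defensive.

Section Main.
Variables (k : fieldType) (V : vectType k) (L : lmodType k) (n : nat)
    (br : L -> L -> L) (G : V -> 'rV[int]_n -> L -> Prop) (D : seq V)
    (cor : V -> V -> k).
Hypothesis char0 : [pchar k] =i pred0.
Hypothesis HLT : is_Lie_torus br G D cor.
Hypothesis Hcl : centreless br.

Local Notation Lam := ('rV[int]_n).
Local Notation P := (V * Lam)%type.
Definition Gp (p : P) := G p.1 p.2.

Lemma H_lie : is_lie_algebra br. Proof. by case: HLT. Qed.
Lemma H_rs : is_irred_root_system D cor. Proof. by case: HLT => _ []. Qed.
Lemma H_gr : is_graded br G. Proof. by case: HLT => _ [] _ []. Qed.
Lemma H_LT1 a : (exists x, Lroot G a x /\ x <> 0) <-> a \in D.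
Proof. by case: HLT => _ [] _ [] _ []. Qed.
Lemma H_LT2 : forall a l, a \in nonzero_roots D -> (exists x, G a l x /\ x <> 0) ->
     exists e f, G a l e /\ G (- a) (- l) f /\
       (forall x, G a l x <-> exists c : k, x = c *: e) /\
       (forall x, G (- a) (- l) x <-> exists c : k, x = c *: f) /\
       (forall b x, inQ D b -> Lroot G b x -> br (br e f) x = cor a b *: x).
Proof. by case: HLT => _ [] _ [] _ [] _ [] _ []. Qed.
Lemma H_LT3 : forall S : L -> Prop, is_subspace S -> (forall x y, S x -> S y -> S (br x y)) ->
     (forall a x, a \in nonzero_roots D -> Lroot G a x -> S x) -> forall x, S x.
Proof. by case: HLT => _ [] _ [] _ [] _ [] _ [] _ []. Qed.

Lemma natf_nz (m : nat) : (0 < m)%N -> (m%:R : k) != 0.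
Proof.
move=> m0; apply/negP => /(natf0_pchar m0) [p]; by rewrite char0.
Qed.

Lemma br_linl a x y z : br (a *: x + y) z = a *: br x z + br y z.
Proof. by case: H_lie. Qed.
Lemma br_linr a x y z : br z (a *: x + y) = a *: br z x + br z y.
Proof. by case: H_lie => _ []. Qed.
Lemma br_alt x : br x x = 0. Proof. by case: H_lie => _ [] _ []. Qed.
Lemma br_jac x y z : br x (br y z) + br y (br z x) + br z (br x y) = 0.
Proof. by case: H_lie => _ [] _ []. Qed.

Definition klin (f : L -> L) := forall (a : k) x y, f (a *: x + y) = a *: f x + f y.

Lemma klin0 f : klin f -> f 0 = 0.
Proof.
move=> h; have := h 1 0 0; rewrite !scale1r addr0 => E.
by apply: (@addrI _ (f 0)); rewrite addr0 -E.
Qed.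
Lemma klinD f : klin f -> forall x y, f (x + y) = f x + f y.
Proof. by move=> h x y; have := h 1 x y; rewrite !scale1r. Qed.
Lemma klinZ f : klin f -> forall a x, f (a *: x) = a *: f x.
Proof. by move=> h a x; rewrite -[a *: x]addr0 h (klin0 h) addr0. Qed.
Lemma klinN f : klin f -> forall x, f (- x) = - f x.
Proof. by move=> h x; rewrite -scaleN1r klinZ // scaleN1r. Qed.
Lemma klinB f : klin f -> forall x y, f (x - y) = f x - f y.
Proof. by move=> h x y; rewrite klinD // klinN. Qed.
Lemma klin_sum f : klin f -> forall (I : Type) (r : seq I) (Q : pred I) (F : I -> L),
  f (\sum_(i <- r | Q i) F i) = \sum_(i <- r | Q i) f (F i).
Proof.
move=> h I r Q F; apply: (big_morph f (klinD h) (klin0 h)).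
Qed.

Lemma klin_brl y : klin (br ^~ y). Proof. by move=> a x z; apply: br_linl. Qed.
Lemma klin_brr y : klin (br y). Proof. by move=> a x z; apply: br_linr. Qed.

Lemma br0l y : br 0 y = 0. Proof. exact: (klin0 (klin_brl y)). Qed.
Lemma br0r y : br y 0 = 0. Proof. exact: (klin0 (klin_brr y)). Qed.

Lemma br_anti x y : br x y = - br y x.
Proof.
have := br_alt (x + y).
rewrite (klinD (klin_brl _)) !(klinD (klin_brr _)) !br_alt add0r addr0 => /eqP.
by rewrite addr_eq0 => /eqP.
Qed.


Lemma sum_pred1 (T : eqType) (r : seq T) (a : T) (F : T -> L) : uniq r ->
  \sum_(i <- r | i == a) F i = if a \in r then F a else 0.
Proof.
elim: r => [|x r IH] /=; first by rewrite big_nil.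
case/andP => xr ur; rewrite big_cons inE IH //.
case: eqP => [<-|]; last by rewrite eq_sym => /eqP/negbTE ->.
by rewrite (negbTE xr) addr0 eqxx.
Qed.

Lemma sum_ind (T : eqType) (r : seq T) (a : T) (F : T -> L) : uniq r ->
  \sum_(i <- r) (if i == a then F i else 0) = if a \in r then F a else 0.
Proof. by move=> ur; rewrite -big_mkcond sum_pred1. Qed.

Lemma sum_ext (T : eqType) (s u : seq T) (F : T -> L) : uniq s -> uniq u ->
  {subset s <= u} ->
  \sum_(p <- s) F p = \sum_(p <- u) (if p \in s then F p else 0).
Proof.
move=> us uu su; rewrite -big_mkcond -big_filter; apply: perm_big.
apply: uniq_perm => //; first exact: filter_uniq.
by move=> p; rewrite mem_filter; case: (boolP (p \in s)) => //= /su ->.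
Qed.

Lemma sub0 (S : L -> Prop) : is_subspace S -> S 0. Proof. by case. Qed.
Lemma subD (S : L -> Prop) : is_subspace S -> forall x y, S x -> S y -> S (x + y).
Proof. by case=> _ h x y Sx Sy; have := h 1 x y Sx Sy; rewrite scale1r. Qed.
Lemma subZ (S : L -> Prop) : is_subspace S -> forall (a : k) x, S x -> S (a *: x).
Proof. by case=> S0 h a x Sx; have := h a x 0 Sx S0; rewrite addr0. Qed.
Lemma subN (S : L -> Prop) : is_subspace S -> forall x, S x -> S (- x).
Proof. by move=> h x Sx; rewrite -scaleN1r; apply: subZ. Qed.
Lemma subB (S : L -> Prop) : is_subspace S -> forall x y, S x -> S y -> S (x - y).
Proof. by move=> h x y Sx Sy; apply: subD => //; apply: subN. Qed.
Lemma sub_sum (S : L -> Prop) : is_subspace S -> forall (I : Type) (r : seq I) (F : I -> L),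
  (forall i, S (F i)) -> S (\sum_(i <- r) F i).
Proof.
move=> h I r F HF; elim: r => [|x r IH]; first by rewrite big_nil; apply: sub0.
by rewrite big_cons; apply: subD.
Qed.

Lemma Gsub p : is_subspace (Gp p). Proof. by case: H_gr => H1 _; apply: H1. Qed.
Lemma Gsub' a l : is_subspace (G a l). Proof. exact: (Gsub (a, l)). Qed.

Lemma dec_ex0 (s0 : seq P) (f0 : P -> L) : (forall p, Gp p (f0 p)) ->
  exists (s : seq P) (f : P -> L), uniq s /\ (forall p, Gp p (f p)) /\
    \sum_(p <- s0) f0 p = \sum_(p <- s) f p.
Proof.
move=> Hf0; elim: s0 => [|q s0 [s [f [us [Hf E]]]]].
  by exists [::], f0; rewrite !big_nil.
exists (undup (q :: s)), (fun p => (if p == q then f0 q else 0) + (if p \in s then f p else 0)).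
split; first exact: undup_uniq.
split.
  move=> p; apply: subD; first exact: Gsub.
    by case: eqP => [->|_]; [apply: Hf0 | apply: sub0; apply: Gsub].
  by case: ifP => _; [apply: Hf | apply: sub0; apply: Gsub].
rewrite big_split sum_ind ?undup_uniq // mem_undup mem_head.
rewrite -sum_ext ?undup_uniq // ?big_cons ?E //.
by move=> p; rewrite mem_undup inE orbC => ->.
Qed.

Lemma dec_ex x : exists d : seq P * (P -> L),
  uniq d.1 /\ (forall p, Gp p (d.2 p)) /\ x = \sum_(p <- d.1) d.2 p.
Proof.
case: H_gr => _ [H2 _]; have [s0 [f0 [Hf0 E]]] := H2 x.
have [s [f [us [Hf E']]]] := dec_ex0 s0 Hf0.
by exists (s, f); rewrite E E'.
Qed.

Definition dec x : seq P * (P -> L) :=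
  proj1_sig (constructive_indefinite_description _ (dec_ex x)).
Lemma decP x : uniq (dec x).1 /\ (forall p, Gp p ((dec x).2 p)) /\
  x = \sum_(p <- (dec x).1) (dec x).2 p.
Proof. exact: (proj2_sig (constructive_indefinite_description _ (dec_ex x))). Qed.

Definition supp x := (dec x).1.
Definition comp (p : P) x := if p \in supp x then (dec x).2 p else 0.

Lemma dec_unique (s s' : seq P) (f f' : P -> L) : uniq s -> uniq s' ->
  (forall p, Gp p (f p)) -> (forall p, Gp p (f' p)) ->
  \sum_(p <- s) f p = \sum_(p <- s') f' p ->
  forall p, (if p \in s then f p else 0) = (if p \in s' then f' p else 0).
Proof.
move=> us us' Hf Hf' E p.
set u := undup (s ++ s').
have uu : uniq u by exact: undup_uniq.
have su : {subset s <= u} by move=> q; rewrite mem_undup mem_cat => ->.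
have su' : {subset s' <= u} by move=> q; rewrite mem_undup mem_cat orbC => ->.
set g := fun q => (if q \in s then f q else 0) - (if q \in s' then f' q else 0).
have Hg : forall q, G q.1 q.2 (g q).
  move=> q; apply: subB; first exact: Gsub.
    by case: ifP => _; [apply: Hf | apply: sub0; apply: Gsub].
  by case: ifP => _; [apply: Hf' | apply: sub0; apply: Gsub].
have sg : \sum_(q <- u) g q = 0.
  by rewrite sumrB -(sum_ext _ us uu su) -(sum_ext _ us' uu su') E subrr.
case: H_gr => _ [_ [H3 _]].
case pu : (p \in u).
  by apply/eqP; rewrite -subr_eq0; apply/eqP; apply: (H3 u g uu Hg sg p pu).
have ps : p \in s = false by apply/negbTE/negP => /su; rewrite pu.
have ps' : p \in s' = false by apply/negbTE/negP => /su'; rewrite pu.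
by rewrite ps ps'.
Qed.

Lemma comp_spec (s : seq P) (f : P -> L) x : uniq s -> (forall p, Gp p (f p)) ->
  x = \sum_(p <- s) f p -> forall p, comp p x = if p \in s then f p else 0.
Proof.
move=> us Hf E p; have [ud [Hd Ed]] := decP x.
by rewrite /comp /supp (dec_unique ud us Hd Hf) // -Ed.
Qed.

Lemma supp_uniq x : uniq (supp x). Proof. by case: (decP x). Qed.
Lemma compG p x : Gp p (comp p x).
Proof.
rewrite /comp; case: ifP => _; first by case: (decP x) => _ [].
by apply: sub0; apply: Gsub.
Qed.
Lemma comp_out p x : p \notin supp x -> comp p x = 0.
Proof. by rewrite /comp => /negbTE ->. Qed.
Lemma comp_sum x : x = \sum_(p <- supp x) comp p x.
Proof.
have [_ [_ E]] := decP x; rewrite {1}E; apply: eq_big_seq => p ps.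
by rewrite /comp ps.
Qed.
Lemma comp_sumU x (u : seq P) : uniq u -> {subset supp x <= u} ->
  x = \sum_(p <- u) comp p x.
Proof.
move=> uu su; rewrite {1}[x]comp_sum (sum_ext _ (supp_uniq x) uu su).
by apply: eq_bigr => p _; case: ifP => // /negbT /comp_out ->.
Qed.
Lemma comp_hom q x : Gp q x -> forall p, comp p x = if p == q then x else 0.
Proof.
move=> Gx p.
rewrite (@comp_spec [:: q] (fun r => if r == q then x else 0) x) ?inE.
- by case: eqP.
- by [].
- by move=> r; case: eqP => [->|_] //; apply: sub0; apply: Gsub.
- by rewrite big_seq1 eqxx.
Qed.

Lemma comp_lin p : klin (comp p).
Proof.
move=> a x y; set u := undup (supp x ++ supp y).
have uu : uniq u by exact: undup_uniq.
have sx : {subset supp x <= u} by move=> q; rewrite mem_undup mem_cat => ->.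
have sy : {subset supp y <= u} by move=> q; rewrite mem_undup mem_cat orbC => ->.
rewrite (@comp_spec u (fun r => a *: comp r x + comp r y)) //.
- case: ifP => // pu.
  have px : p \notin supp x by apply/negP => /sx; rewrite pu.
  have py : p \notin supp y by apply/negP => /sy; rewrite pu.
  by rewrite !comp_out // scaler0 addr0.
- move=> r; apply: subD; first exact: Gsub.
    by apply: subZ; [exact: Gsub | exact: compG].
  exact: compG.
- by rewrite big_split /= -scaler_sumr -(comp_sumU uu sx) -(comp_sumU uu sy).
Qed.

Lemma comp0 p : comp p 0 = 0. Proof. exact: klin0 (comp_lin p). Qed.

Lemma comp_eq0 x : (forall p, comp p x = 0) -> x = 0.
Proof. by move=> h; rewrite [x]comp_sum big1 // => p _; apply: h. Qed.

Lemma comp_comp p q x : comp p (comp q x) = if p == q then comp q x else 0.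
Proof. exact: (comp_hom (compG q x)). Qed.

Lemma comp_sum_hom (I : Type) (r : seq I) (F : I -> L) (h : I -> P) p :
  (forall i, Gp (h i) (F i)) ->
  comp p (\sum_(i <- r) F i) = \sum_(i <- r | h i == p) F i.
Proof.
move=> HF; rewrite (klin_sum (comp_lin p)) [RHS]big_mkcond; apply: eq_bigr => i _.
by rewrite (comp_hom (HF i)) eq_sym.
Qed.

Lemma Gbr a b l m x y : G a l x -> G b m y -> G (a + b) (l + m) (br x y).
Proof. by case: H_gr => _ [_ [_ H4]]; apply: H4. Qed.

Lemma pair_shift (r : P) (b : V) (m : Lam) (a : V) (l : Lam) :
  ((r.1 + b, r.2 + m) == (a, l)) = (r == (a - b, l - m)).
Proof.
case: r => r1 r2 /=; rewrite !xpair_eqE.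
by rewrite [r1 == a - b]eq_sym [r2 == l - m]eq_sym !subr_eq [a == _]eq_sym [l == _]eq_sym.
Qed.

Lemma comp_brr z y b m a l : G b m y ->
  comp (a, l) (br z y) = br (comp (a - b, l - m) z) y.
Proof.
move=> Gy; rewrite {1}[z]comp_sum (klin_sum (klin_brl y)).
rewrite (@comp_sum_hom _ _ _ (fun r => (r.1 + b, r.2 + m))); last first.
  by move=> r; apply: Gbr => //; apply: (compG r z).
rewrite (eq_bigl (fun r => r == (a - b, l - m))); last by move=> r; apply: pair_shift.
rewrite sum_pred1 ?supp_uniq //; case: ifP => // /negbT /comp_out ->.
by rewrite br0l.
Qed.

Lemma comp_brl z y b m a l : G b m y ->
  comp (a, l) (br y z) = br y (comp (a - b, l - m) z).
Proof.
move=> Gy; rewrite br_anti (klinN (comp_lin _)) (@comp_brr z y b m a l Gy).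
by rewrite br_anti opprK.
Qed.

Lemma G_Lroot a l x : G a l x -> Lroot G a x.
Proof.
move=> Gx; exists [:: l], (fun l' => if l' == l then x else 0); split.
  by move=> l'; case: eqP => [->|_] //; apply: sub0; apply: Gsub'.
by rewrite big_seq1 eqxx.
Qed.

Lemma G_Ldeg a l x : G a l x -> Ldeg G l x.
Proof.
move=> Gx; exists [:: a], (fun a' => if a' == a then x else 0); split.
  by move=> a'; case: eqP => [->|_] //; apply: sub0; apply: Gsub'.
by rewrite big_seq1 eqxx.
Qed.

Lemma Lroot_comp a x : Lroot G a x -> forall p, p.1 != a -> comp p x = 0.
Proof.
case=> s [f [Hf ->]] p pa.
rewrite (@comp_sum_hom _ _ _ (fun l => (a, l))) //.
by rewrite big1 // => l /eqP E; move: pa; rewrite -E eqxx.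
Qed.

Lemma Ldeg_comp l x : Ldeg G l x -> forall p, p.2 != l -> comp p x = 0.
Proof.
case=> s [f [Hf ->]] p pl.
rewrite (@comp_sum_hom _ _ _ (fun a => (a, l))) //.
by rewrite big1 // => a /eqP E; move: pl; rewrite -E eqxx.
Qed.

Lemma comp_Lroot a x : (forall p, p.1 != a -> comp p x = 0) -> Lroot G a x.
Proof.
move=> h; set s := undup [seq r.2 | r <- supp x].
exists s, (fun l => comp (a, l) x); split; first by move=> l; apply: (compG (a, l)).
apply/eqP; rewrite -subr_eq0; apply/eqP; apply: comp_eq0 => p.
rewrite (klinB (comp_lin p)) (@comp_sum_hom _ _ _ (fun l => (a, l))); last first.
  by move=> l; apply: (compG (a, l)).
case: p => p1 p2; case: (eqVneq p1 a) => [->|pa]; last first.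
  rewrite h // big1 ?subrr // => l /eqP [E _]; by move: pa; rewrite E eqxx.
rewrite (eq_bigl (fun l => l == p2)); last by move=> l; rewrite xpair_eqE eqxx.
rewrite sum_pred1 ?undup_uniq //; case: ifP => [_|]; first by rewrite subrr.
move=> /negbT ps; rewrite comp_out ?subrr //; apply: contra ps => ps.
by rewrite mem_undup; apply/mapP; exists (a, p2).
Qed.

Lemma comp_Ldeg l x : (forall p, p.2 != l -> comp p x = 0) -> Ldeg G l x.
Proof.
move=> h; set s := undup [seq r.1 | r <- supp x].
exists s, (fun a => comp (a, l) x); split; first by move=> a; apply: (compG (a, l)).
apply/eqP; rewrite -subr_eq0; apply/eqP; apply: comp_eq0 => p.
rewrite (klinB (comp_lin p)) (@comp_sum_hom _ _ _ (fun a => (a, l))); last first.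
  by move=> a; apply: (compG (a, l)).
case: p => p1 p2; case: (eqVneq p2 l) => [->|pl]; last first.
  rewrite h // big1 ?subrr // => a /eqP [_ E]; by move: pl; rewrite E eqxx.
rewrite (eq_bigl (fun a => a == p1)); last by move=> a; rewrite xpair_eqE eqxx andbT.
rewrite sum_pred1 ?undup_uniq //; case: ifP => [_|]; first by rewrite subrr.
move=> /negbT ps; rewrite comp_out ?subrr //; apply: contra ps => ps.
by rewrite mem_undup; apply/mapP; exists (p1, l).
Qed.

Lemma comp_hom_of q x : (forall p, p != q -> comp p x = 0) -> Gp q x.
Proof.
move=> h; rewrite [x]comp_sum.
rewrite (eq_bigr (fun p => if p == q then comp p x else 0)); last first.
  by move=> p _; case: eqP => // /eqP; apply: h.
rewrite sum_ind ?supp_uniq //; case: ifP => _; first exact: compG.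
by apply: sub0; apply: Gsub.
Qed.


Local Notation nz := (nonzero_roots D).

Lemma nzP a : (a \in nz) = (a != 0) && (a \in D).
Proof. by rewrite mem_filter. Qed.

Lemma D_uniq : uniq D. Proof. by case: H_rs. Qed.
Lemma D0 : 0 \in D. Proof. by case: H_rs => _ []. Qed.

Lemma cor_lin a : a \in nz -> forall (c : k) x y, cor a (c *: x + y) = c * cor a x + cor a y.
Proof. by case: H_rs => _ [_ [_ [H _]]] /H []. Qed.
Lemma cor_aa a : a \in nz -> cor a a = 2.
Proof. by case: H_rs => _ [_ [_ [H _]]] /H [_ []]. Qed.
Lemma cor_refl a b : a \in nz -> b \in D -> b - cor a b *: a \in D.
Proof. by case: H_rs => _ [_ [_ [H _]]] /H [_ [_ [H' _]]]; apply: H'. Qed.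

Lemma cor0 a : a \in nz -> cor a 0 = 0.
Proof.
move=> an; have := cor_lin an 1 0 0; rewrite scale1r addr0 mul1r => E.
by apply: (@addrI _ (cor a 0)); rewrite addr0 -E.
Qed.
Lemma cor2 a : a \in nz -> forall (y1 y2 : k) u v,
  cor a (y1 *: u + y2 *: v) = y1 * cor a u + y2 * cor a v.
Proof.
move=> an y1 y2 u v; rewrite cor_lin //; congr (_ + _).
by have := cor_lin an y2 v 0; rewrite addr0 cor0 // addr0.
Qed.

Lemma two_nz : (2 : k) != 0. Proof. exact: (natf_nz (m := 2)). Qed.

Lemma natf_inj (i j : nat) : (i%:R : k) = j%:R -> i = j.
Proof.
wlog ij : i j / (i <= j)%N.
  by move=> W E; case: (leqP i j) => [|/ltnW] h; [apply: W | apply/esym/W].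
move=> E; apply/eqP; rewrite eqn_leq ij /=; apply/negP => /negP; rewrite -ltnNge => lt.
have : ((j - i)%N%:R : k) != 0 by apply: natf_nz; rewrite subn_gt0.
by rewrite natrB ?E ?subrr ?eqxx // ltnW.
Qed.

Lemma SEP a b : a \in D -> b \in D -> (forall c, c \in nz -> cor c a = cor c b) -> a = b.
Proof.
move=> aD bD H; apply: NNPP => ab.
case: (eqVneq a 0) => [a0|a0].
  have bn : b \in nz by rewrite nzP bD andbT -a0 eq_sym; apply/eqP.
  by move: (H b bn); rewrite a0 cor0 // cor_aa // => /esym/eqP; rewrite (negbTE two_nz).
case: (eqVneq b 0) => [b0|b0].
  have an : a \in nz by rewrite nzP aD a0.
  by move: (H a an); rewrite b0 cor0 // cor_aa // => /eqP; rewrite (negbTE two_nz).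
have an : a \in nz by rewrite nzP aD a0.
have bn : b \in nz by rewrite nzP bD b0.
have cab : cor a b = 2 by rewrite -(H a an) cor_aa.
have cba : cor b a = 2 by rewrite (H b bn) cor_aa.
pose sq (j : nat) := (1 - (j.*2)%:R) *: b + (j.*2)%:R *: a.
have sqD : forall j, sq j \in D.
  elim=> [|j IH]; first by rewrite /sq double0 mulr0n subr0 scale1r scale0r addr0.
  set c : k := (j.*2)%:R.
  have c1 : ((j.+1).*2)%:R = c + 2 by rewrite doubleS /c -addn2 natrD.
  have cb : cor b (sq j) = 2.
    by rewrite /sq cor2 // cor_aa // cba; ring.
  have E1 : sq j - cor b (sq j) *: b = (1 - c - 2) *: b + c *: a.
    by rewrite cb /sq -/c addrAC -scalerBl.
  have ca : cor a ((1 - c - 2) *: b + c *: a) = - 2.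
    by rewrite cor2 // cab cor_aa //; ring.
  have := cor_refl an (cor_refl bn IH); rewrite E1 ca.
  rewrite /sq c1 scaleNr opprK -addrA -scalerDl => X.
  by rewrite (_ : 1 - (c + 2) = 1 - c - 2) //; ring.
have sq_inj : injective sq.
  move=> i j E; apply: double_inj; apply: natf_inj; apply/eqP; rewrite -subr_eq0; apply/eqP.
  have : sq i - sq j = 0 by rewrite E subrr.
  rewrite /sq.
  set ci : k := (i.*2)%:R; set cj : k := (j.*2)%:R.
  have -> : (1 - ci) *: b + ci *: a - ((1 - cj) *: b + cj *: a) = (ci - cj) *: (a - b).
    have lin2 : forall (x1 y1 x2 y2 : k),
        x1 *: b + y1 *: a - (x2 *: b + y2 *: a) = (x1 - x2) *: b + (y1 - y2) *: a.
      by move=> *; rewrite !scalerBl opprD addrACA.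
    rewrite lin2 (_ : (1 - ci) - (1 - cj) = - (ci - cj)); last by ring.
    by rewrite scaleNr addrC -scalerBr.
  move/eqP; rewrite scaler_eq0 => /orP [/eqP //|].
  by rewrite subr_eq0 => /eqP ab'; case: ab.
have U : uniq (map sq (iota 0 (size D).+1)) by rewrite (map_inj_uniq sq_inj) iota_uniq.
have S : {subset map sq (iota 0 (size D).+1) <= D}.
  by move=> x /mapP [j _ ->]; exact: sqD.
by have := uniq_leq_size U S; rewrite size_map size_iota ltnn.
Qed.


Lemma D_inQ b : b \in D -> inQ D b.
Proof.
move=> bD; have il : (index b D < size D)%N by rewrite index_mem.
exists (fun i : 'I_(size D) => ((nat_of_ord i == index b D) : nat)%:Z).
rewrite (bigD1 (Ordinal il)) //= eqxx big1 ?addr0 ?nth_index //.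
move=> i ne; case: eqP => E //=; case/eqP: ne; exact: val_inj.
Qed.

Lemma nz_piece a x : Lroot G a x -> x <> 0 -> exists l y, G a l y /\ y <> 0.
Proof.
case=> s [f [Hf ->]] nx; apply: NNPP => H; apply: nx; apply: big1 => l _.
by apply: NNPP => fl; apply: H; exists l, (f l).
Qed.

Lemma Lroot_D a x : Lroot G a x -> x <> 0 -> a \in D.
Proof. by move=> Lx nx; apply/H_LT1; exists x. Qed.

Lemma root_piece a : a \in D -> exists l y, G a l y /\ y <> 0.
Proof. by move/H_LT1 => [x [Lx nx]]; apply: nz_piece Lx nx. Qed.

Lemma sl2 a l y0 : a \in nz -> G a l y0 -> y0 <> 0 ->
  exists e f, G a l e /\ (forall x, G a l x <-> exists c : k, x = c *: e) /\
    G 0 0 (br e f) /\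
    (forall b x, inQ D b -> Lroot G b x -> br (br e f) x = cor a b *: x).
Proof.
move=> an Gy ny; have [e [f [Ge [Gf [He [_ Hh]]]]]] := H_LT2 an (ex_intro _ y0 (conj Gy ny)).
exists e, f; do 3!split => //.
by have := Gbr Ge Gf; rewrite !subrr.
Qed.

Lemma cent_klin c : in_centroid br c -> klin c. Proof. by case. Qed.
Lemma cent_brl c x y : in_centroid br c -> c (br x y) = br (c x) y.
Proof. by case=> _ []. Qed.
Lemma cent_brr c x y : in_centroid br c -> c (br x y) = br x (c y).
Proof. by case=> _ []. Qed.

Lemma Rpres c b l x : in_centroid br c -> G b l x ->
  forall p, p.1 != b -> comp p (c x) = 0.
Proof.
move=> Cc Gx [p1 p2] /= pb; apply: NNPP => ny; set y := comp (p1, p2) (c x) in ny.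
have Gy : G p1 p2 y by exact: (compG (p1, p2)).
have pD : p1 \in D by apply: Lroot_D (G_Lroot Gy) ny.
have nx : x <> 0.
  by move=> x0; apply: ny; rewrite /y x0 (klin0 (cent_klin Cc)) comp0.
have bD : b \in D by apply: Lroot_D (G_Lroot Gx) nx.
move/eqP: pb; apply; apply: SEP => // a an.
have aD : a \in D by move: an; rewrite nzP => /andP [].
have [l0 [y0 [Gy0 ny0]]] := root_piece aD.
have [e [f [Ge [He [Gh Hh]]]]] := sl2 an Gy0 ny0.
have E1 : br (br e f) (c x) = cor a b *: c x.
  by rewrite -cent_brr // (Hh b x (D_inQ bD) (G_Lroot Gx)) (klinZ (cent_klin Cc)).
have E2 : comp (p1, p2) (br (br e f) (c x)) = cor a p1 *: y.
  by rewrite (@comp_brl (c x) _ 0 0 p1 p2 Gh) !subr0 -/y (Hh p1 y (D_inQ pD) (G_Lroot Gy)).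
move: E2; rewrite E1 (klinZ (comp_lin _)) -/y => /eqP.
rewrite -subr_eq0 -scalerBl scaler_eq0 subr_eq0 => /orP [/eqP -> //|/eqP y0'].
by case: ny.
Qed.

Lemma Rroot c a x : in_centroid br c -> Lroot G a x -> Lroot G a (c x).
Proof.
move=> Cc [s [f [Hf ->]]]; apply: comp_Lroot => p pa.
rewrite (klin_sum (cent_klin Cc)) (klin_sum (comp_lin p)) big1 // => l _.
exact: (Rpres Cc (Hf l)).
Qed.


Lemma Cdeg_cent c g : in_Cdeg br G g c -> in_centroid br c. Proof. by case. Qed.

Lemma Hshift c g b l x : in_Cdeg br G g c -> G b l x -> G b (l + g) (c x).
Proof.
move=> [Cc Hd] Gx; apply: (comp_hom_of (q := (b, l + g))) => p pq.
case: (eqVneq p.1 b) => pb; last exact: (Rpres Cc Gx).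
apply: (Ldeg_comp (Hd _ _ (G_Ldeg Gx))); apply: contra pq => /eqP E.
by case: p pb E => p1 p2 /= -> ->.
Qed.

Lemma comp_shift c g a l z : in_Cdeg br G g c ->
  comp (a, l + g) (c z) = c (comp (a, l) z).
Proof.
move=> Cd; have Cc := Cdeg_cent Cd.
rewrite {1}[z]comp_sum (klin_sum (cent_klin Cc)).
rewrite (@comp_sum_hom _ _ _ (fun r => (r.1, r.2 + g))); last first.
  by move=> r; apply: (Hshift Cd); apply: (compG r z).
rewrite (eq_bigl (fun r => r == (a, l))); last first.
  by case=> r1 r2; rewrite /= !xpair_eqE (inj_eq (addIr g)).
rewrite sum_pred1 ?supp_uniq //; case: ifP => // /negbT /comp_out ->.
by rewrite (klin0 (cent_klin Cc)).
Qed.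

Definition gideal (I : L -> Prop) :=
  is_subspace I /\ (forall x z, I x -> I (br x z)) /\ (forall p x, I x -> I (comp p x)).

Lemma centralizer x1 : (forall a m y, a \in nz -> G a m y -> br x1 y = 0) -> x1 = 0.
Proof.
move=> H; apply: Hcl; apply: (H_LT3 (S := fun z => br x1 z = 0)).
- split; first exact: br0r.
  by move=> a x y Ex Ey; rewrite br_linr Ex Ey scaler0 addr0.
- move=> x y Ex Ey; have := br_jac x1 x y.
  by rewrite Ex br0r (br_anti y x1) Ey oppr0 br0r !addr0.
- move=> a x an [s [f [Hf ->]]]; rewrite (klin_sum (klin_brr x1)) big1 // => l _.
  exact: H an (Hf l).
Qed.

Lemma STEP I a v e' : gideal I -> a \in nz -> G a v e' -> I e' -> e' <> 0 ->
  forall b, inQ D b -> cor a b != 0 -> forall x, Lroot G b x -> I x.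
Proof.
move=> [IS [Ibr Icp]] an Ge Ie ne b bQ cb x Lx.
have [e [f [Ge0 [He [_ Hh]]]]] := sl2 an Ge ne.
have [c Ec] := (He e').1 Ge.
have c0 : c != 0 by apply/negP => /eqP c0; apply: ne; rewrite Ec c0 scale0r.
have Ie0 : I e by have := subZ IS (c^-1) Ie; rewrite Ec scalerA mulVf // scale1r.
have := subZ IS (cor a b)^-1 (Ibr _ x (Ibr _ f Ie0)).
by rewrite (Hh b x bQ Lx) scalerA mulVf // scale1r.
Qed.

Definition holds (Q : Prop) : bool := if excluded_middle_informative Q then true else false.
Lemma holdsP Q : holds Q <-> Q.
Proof. by rewrite /holds; case: excluded_middle_informative. Qed.

Lemma GS I : gideal I -> (exists x, I x /\ x <> 0) -> forall x, I x.
Proof.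
move=> gI [x0 [Ix0 nx0]]; have [IS [Ibr Icp]] := gI.
have [p np] : exists p, comp p x0 <> 0.
  by apply: NNPP => H; apply: nx0; apply: comp_eq0 => p; apply: NNPP => h; apply: H; exists p.
set x1 := comp p x0 in np.
have Ix1 : I x1 by apply: Icp.
have Gx1 : G p.1 p.2 x1 by apply: compG.
have [a [v [e' [an [Ge [Ie ne]]]]]] : exists a v e', a \in nz /\ G a v e' /\ I e' /\ e' <> 0.
  case: (eqVneq p.1 0) => p0; last first.
    exists p.1, p.2, x1; do !split => //.
    by rewrite nzP p0 /=; apply: Lroot_D (G_Lroot Gx1) np.
  have [a [m [y [an [Gy ny]]]]] : exists a m y, a \in nz /\ G a m y /\ br x1 y <> 0.
    apply: NNPP => H; apply: np; apply: centralizer => a m y an Gy.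
    by apply: NNPP => h; apply: H; exists a, m, y.
  exists a, (p.2 + m), (br x1 y); do !split => //; last by apply: Ibr.
  by have := Gbr Gx1 Gy; rewrite p0 add0r.
have Pa : forall x, Lroot G a x -> I x.
  apply: (STEP gI an Ge Ie ne); first by apply: D_inQ; move: an; rewrite nzP => /andP [].
  by rewrite cor_aa // two_nz.
pose Pb : pred V := fun b => holds (forall x, Lroot G b x -> I x).
have irr : all Pb nz || all (predC Pb) nz.
  case: H_rs => _ [_ [_ [_ [_ Hirr]]]]; apply: Hirr => b c bn cn Pbb Pbc.
  apply: NNPP => cbc; move/negP: Pbc; apply; apply/holdsP.
  have bD : b \in D by move: bn; rewrite nzP => /andP [].
  have [l [y [Gy ny]]] := root_piece bD.
  have Iy : I y by move: Pbb => /holdsP; apply; apply: G_Lroot Gy.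
  apply: (STEP gI bn Gy Iy ny); last by apply/eqP.
  by apply: D_inQ; move: cn; rewrite nzP => /andP [].
have allP' : all Pb nz.
  case/orP: irr => // /allP /(_ a an) /=; by move/negP; case; apply/holdsP.
apply: (H_LT3 (S := I)) => //; first by move=> x y Ix _; apply: Ibr.
by move=> b x bn Lx; move/allP: allP' => /(_ b bn) /holdsP; apply.
Qed.

Lemma Cdeg_inj c g : in_Cdeg br G g c -> (exists x, c x <> 0) ->
  forall z, c z = 0 -> z = 0.
Proof.
move=> Cd [x nx] z cz; have Cc := Cdeg_cent Cd; have cl := cent_klin Cc.
apply: NNPP => nz0; apply: nx.
apply: (@GS (fun w => c w = 0)); last by exists z.
split; first by split; [apply: klin0 | move=> a u w cu cw; rewrite cl cu cw scaler0 addr0].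
split; first by move=> u w cu; rewrite cent_brl // cu br0l.
by case=> a l u cu; rewrite -(comp_shift a l u Cd) cu comp0.
Qed.

Lemma Cdeg_surj c g : in_Cdeg br G g c -> (exists x, c x <> 0) ->
  forall y, exists z, y = c z.
Proof.
move=> Cd [x nx]; have Cc := Cdeg_cent Cd; have cl := cent_klin Cc.
apply: (@GS (fun y => exists z, y = c z)); last by exists (c x); split => //; exists x.
split.
  split; first by exists 0; rewrite klin0.
  by move=> a u w [u' ->] [w' ->]; exists (a *: u' + w'); rewrite cl.
split; first by move=> u w [u' ->]; exists (br u' w); rewrite cent_brl.
case=> a l u [u' ->]; exists (comp (a, l - g) u').
by rewrite -(comp_shift a (l - g) u' Cd) subrK.
Qed.


Lemma klin_comp f g : klin f -> klin g -> klin (fun x => f (g x)).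
Proof. by move=> hf hg a x y; rewrite hg hf. Qed.

Lemma cent_comb (a : k) c1 c2 : in_centroid br c1 -> in_centroid br c2 ->
  in_centroid br (fun y => a *: c1 y + c2 y).
Proof.
move=> C1 C2; split.
  move=> b x y; rewrite (cent_klin C1) (cent_klin C2) !scalerDr !scalerA mulrC.
  by rewrite addrACA.
split=> x y.
  by rewrite (cent_brl _ _ C1) (cent_brl _ _ C2) br_linl.
by rewrite (cent_brr _ _ C1) (cent_brr _ _ C2) br_linr.
Qed.

Lemma cent_zero : in_centroid br (fun _ => 0).
Proof. by split; [move=> *; rewrite scaler0 addr0 | split=> *; rewrite ?br0l ?br0r]. Qed.

Lemma cent_id : in_centroid br id. Proof. by split. Qed.

Lemma cent_compo c1 c2 : in_centroid br c1 -> in_centroid br c2 ->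
  in_centroid br (fun y => c1 (c2 y)).
Proof.
move=> C1 C2; split; first exact: klin_comp (cent_klin C1) (cent_klin C2).
by split=> x y; [rewrite (cent_brl _ _ C2) (cent_brl _ _ C1) | rewrite (cent_brr _ _ C2) (cent_brr _ _ C1)].
Qed.

Lemma Cdeg_comb (a : k) g c1 c2 : in_Cdeg br G g c1 -> in_Cdeg br G g c2 ->
  in_Cdeg br G g (fun y => a *: c1 y + c2 y).
Proof.
move=> [C1 H1] [C2 H2]; split; first exact: cent_comb.
move=> m x Lx; apply: comp_Ldeg => p pm.
rewrite (comp_lin p) (Ldeg_comp (H1 _ _ Lx)) // (Ldeg_comp (H2 _ _ Lx)) //.
by rewrite scaler0 addr0.
Qed.

Lemma Cdeg_compo g1 g2 c1 c2 : in_Cdeg br G g1 c1 -> in_Cdeg br G g2 c2 ->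
  in_Cdeg br G (g2 + g1) (fun y => c1 (c2 y)).
Proof.
move=> [C1 H1] [C2 H2]; split; first exact: cent_compo.
by move=> m x Lx; rewrite addrA; apply: H1; apply: H2.
Qed.

Lemma L_nz : exists x : L, x <> 0.
Proof. by have [x [_ nx]] := (H_LT1 0).2 D0; exists x. Qed.

Lemma Gamma0 : in_Gamma br G 0.
Proof.
exists id; split; first by split; [exact: cent_id | move=> m x; rewrite addr0].
by have [x nx] := L_nz; exists x.
Qed.

Lemma C1 t d g : in_Cdeg br G g t -> (exists x, t x <> 0) -> in_Cdeg br G g d ->
  exists s : k, forall y, d y = s *: t y.
Proof.
move=> Ct tn Cd.
have [a an] : exists a, a \in nz.
  case: H_rs => _ [_ [_ [_ [Hne _]]]]; case E: nz Hne => [|a r] // _.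
  by exists a; rewrite mem_head.
have aD : a \in D by move: an; rewrite nzP => /andP [].
have [l [e0 [Ge0 ne0]]] := root_piece aD.
have Gt : G a (l + g) (t e0) by apply: (Hshift Ct).
have Gd : G a (l + g) (d e0) by apply: (Hshift Cd).
have nt : t e0 <> 0 by move=> /(Cdeg_inj Ct tn).
have [e2 [f2 [_ [He2 _]]]] := sl2 an Gt nt.
have [c1 E1] := (He2 _).1 Gt; have [c2 E2] := (He2 _).1 Gd.
have c10 : c1 != 0 by apply/negP => /eqP c0; apply: nt; rewrite E1 c0 scale0r.
exists (c2 / c1).
have Cd' := Cdeg_comb (- (c2 / c1)) Ct Cd.
have d'0 : (- (c2 / c1)) *: t e0 + d e0 = 0.
  by rewrite E1 E2 scalerA mulNr divfK // scaleNr addNr.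
move=> y; apply: NNPP => ne; apply: ne0; apply: (Cdeg_inj Cd') d'0.
exists y => E; apply: ne; apply/eqP; rewrite -subr_eq0 addrC -scaleNr; exact/eqP.
Qed.

Lemma Cdeg_inv t g : in_Cdeg br G g t -> (exists x, t x <> 0) ->
  exists ti, in_Cdeg br G (- g) ti /\ (exists x, ti x <> 0) /\ (forall y, t (ti y) = y).
Proof.
move=> Ct tn; have Cc := Cdeg_cent Ct; have tl := cent_klin Cc.
have inj := Cdeg_inj Ct tn.
have tinj : forall u v, t u = t v -> u = v.
  by move=> u v E; apply/eqP; rewrite -subr_eq0; apply/eqP; apply: inj; rewrite (klinB tl) E subrr.
pose ti y := proj1_sig (constructive_indefinite_description _ (Cdeg_surj Ct tn y)).
have tiK : forall y, t (ti y) = y.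
  by move=> y; rewrite /ti; case: constructive_indefinite_description.
exists ti; split; last split => //.
  split.
    split; first by move=> a x y; apply: tinj; rewrite tl !tiK.
    split=> x y; apply: tinj; rewrite ?tiK.
      by rewrite cent_brl // tiK.
    by rewrite cent_brr // tiK.
  move=> m x Lx; apply: comp_Ldeg => p pm; apply: inj.
  case: p pm => p1 p2 /= pm; rewrite -(comp_shift _ _ _ Ct) tiK.
  apply: (Ldeg_comp Lx) => /=; apply: contra pm => /eqP <-; by rewrite addrK.
have [x nx] := tn; exists (t x); have -> : ti (t x) = x by apply: tinj; rewrite tiK.
by move=> x0; apply: nx; rewrite x0 (klin0 tl).
Qed.

Lemma Gamma_sub u v : in_Gamma br G u -> in_Gamma br G v -> in_Gamma br G (u - v).
Proof.
move=> [cu [Cu nu]] [cv [Cv nv]].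
have [ti [Ci [ni _]]] := Cdeg_inv Cv nv.
exists (fun y => ti (cu y)); split; first exact: Cdeg_compo Ci Cu.
have [x nx] := nu; exists x => E; apply: nx; apply: (Cdeg_inj Ci ni) E.
Qed.


Definition cpart (c : L -> L) (g : Lam) (z : L) :=
  \sum_(r <- supp z) comp (r.1, r.2 + g) (c (comp r z)).

Section Cpart.
Variables (c : L -> L) (g : Lam).
Hypothesis Cc : in_centroid br c.

Lemma cpart_sumU z (u : seq P) : uniq u -> {subset supp z <= u} ->
  cpart c g z = \sum_(r <- u) comp (r.1, r.2 + g) (c (comp r z)).
Proof.
move=> uu su; rewrite /cpart (sum_ext _ (supp_uniq z) uu su).
apply: eq_bigr => r _; case: ifP => // /negbT /comp_out ->.
by rewrite (klin0 (cent_klin Cc)) comp0.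
Qed.

Lemma cpart_lin : klin (cpart c g).
Proof.
move=> a x y; set u := undup (supp x ++ supp y ++ supp (a *: x + y)).
have uu : uniq u by exact: undup_uniq.
have sx : {subset supp x <= u} by move=> q; rewrite mem_undup !mem_cat => ->.
have sy : {subset supp y <= u} by move=> q; rewrite mem_undup !mem_cat => ->; rewrite orbT.
have sz : {subset supp (a *: x + y) <= u}.
  by move=> q; rewrite mem_undup !mem_cat => ->; rewrite !orbT.
rewrite (cpart_sumU uu sx) (cpart_sumU uu sy) (cpart_sumU uu sz).
rewrite scaler_sumr -big_split; apply: eq_bigr => r _.
by rewrite (comp_lin r) (cent_klin Cc) (comp_lin _).
Qed.

Lemma cpart_hom q x : Gp q x -> cpart c g x = comp (q.1, q.2 + g) (c x).
Proof.
move=> Gx; rewrite /cpart.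
rewrite (eq_bigr (fun r => if r == q then comp (q.1, q.2 + g) (c x) else 0)); last first.
  move=> r _; rewrite (comp_hom Gx); case: eqP => [->|_] //.
  by rewrite (klin0 (cent_klin Cc)) comp0.
rewrite sum_ind ?supp_uniq //; case: ifP => // /negbT /comp_out.
by rewrite (comp_hom Gx) eqxx => ->; rewrite (klin0 (cent_klin Cc)) comp0.
Qed.

Lemma cpart_decomp z : cpart c g z = \sum_(r <- supp z) cpart c g (comp r z).
Proof. by apply: eq_bigr => r _; rewrite (cpart_hom (compG r z)). Qed.

End Cpart.

Lemma bilin_ext (F1 F2 : L -> L -> L) :
  (forall y, klin (F1 ^~ y)) -> (forall x, klin (F1 x)) ->
  (forall y, klin (F2 ^~ y)) -> (forall x, klin (F2 x)) ->
  (forall q q' u w, Gp q u -> Gp q' w -> F1 u w = F2 u w) ->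
  forall x y, F1 x y = F2 x y.
Proof.
move=> H1l H1r H2l H2r H x y.
rewrite [x]comp_sum (klin_sum (H1l y)) (klin_sum (H2l y)); apply: eq_bigr => r _.
rewrite [y]comp_sum (klin_sum (H1r _)) (klin_sum (H2r _)); apply: eq_bigr => r' _.
exact: H (compG r x) (compG r' y).
Qed.

Lemma cpart_Cdeg c g : in_centroid br c -> in_Cdeg br G g (cpart c g).
Proof.
move=> Cc; have cl := cpart_lin g Cc.
split; first split => //.
- split.
  + apply: (@bilin_ext (fun x y => cpart c g (br x y)) (fun x y => br (cpart c g x) y)).
    * by move=> y; apply: klin_comp cl (klin_brl y).
    * by move=> x; apply: klin_comp cl (klin_brr x).
    * by move=> y; apply: klin_comp (klin_brl y) cl.
    * by move=> x; apply: klin_brr.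
    case=> q1 q2 [q1' q2'] u w Gu Gw /=.
    rewrite (@cpart_hom c g Cc (q1 + q1', q2 + q2') _ (Gbr Gu Gw)) (@cpart_hom c g Cc _ _ Gu) /= cent_brl //.
    by rewrite (@comp_brr (c u) w q1' q2' _ _ Gw) addrK addrAC addrK.
  + apply: (@bilin_ext (fun x y => cpart c g (br x y)) (fun x y => br x (cpart c g y))).
    * by move=> y; apply: klin_comp cl (klin_brl y).
    * by move=> x; apply: klin_comp cl (klin_brr x).
    * by move=> y; apply: klin_brl.
    * by move=> x; apply: klin_comp (klin_brr x) cl.
    case=> q1 q2 [q1' q2'] u w Gu Gw /=.
    rewrite (@cpart_hom c g Cc (q1 + q1', q2 + q2') _ (Gbr Gu Gw)) (@cpart_hom c g Cc _ _ Gw) /= cent_brr //.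
    by rewrite (@comp_brl (c w) u q1 q2 _ _ Gu) [q1 + q1']addrC addrK -[q2 + q2' + g]addrA [q2 + (q2' + g)]addrC addrK.
- move=> m x Lx; apply: comp_Ldeg => p pm.
  rewrite (cpart_decomp _ Cc) (@comp_sum_hom _ _ _ (fun r => (r.1, r.2 + g))); last first.
    by move=> r; rewrite (cpart_hom _ Cc (compG r x)); apply: (compG (r.1, r.2 + g)).
  rewrite big1 // => r /eqP E.
  rewrite (Ldeg_comp Lx (p := r)) ?(klin0 cl) //; apply: contra pm => /eqP rm.
  by rewrite -E /= rm.
Qed.

Lemma recon c : in_centroid br c -> (forall g y, cpart c g y = 0) -> forall y, c y = 0.
Proof.
move=> Cc H y; apply: comp_eq0 => p.
rewrite [y]comp_sum (klin_sum (cent_klin Cc)) (klin_sum (comp_lin p)) big1 // => r _.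
case: (eqVneq p.1 r.1) => pr; last exact: (Rpres Cc (compG r y)).
rewrite -(H (p.2 - r.2) (comp r y)) (cpart_hom _ Cc (compG r y)) addrC subrK.
by case: p pr => p1 p2 /= ->; case: r.
Qed.


Definition zmap : L -> L := fun _ => 0.

Definition Cspan (s : seq L) (x : L) := exists g : nat -> L -> L,
  (forall j, in_centroid br (g j)) /\ x = \sum_(0 <= j < size s) g j (nth 0 s j).

Lemma cent_scale (a : k) c : in_centroid br c -> in_centroid br (fun y => a *: c y).
Proof.
move=> Cc; split.
  by move=> b x y; rewrite (cent_klin Cc) scalerDr !scalerA mulrC.
split=> x y; first by rewrite (cent_brl _ _ Cc) -[a *: c x]addr0 br_linl br0l addr0.
by rewrite (cent_brr _ _ Cc) -[a *: c y]addr0 br_linr br0r addr0.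
Qed.

Lemma cent_add c1 c2 : in_centroid br c1 -> in_centroid br c2 ->
  in_centroid br (fun y => c1 y + c2 y).
Proof.
move=> C1 C2; split.
  by move=> b x y; rewrite (cent_klin C1) (cent_klin C2) scalerDr addrACA.
split=> x y.
  by rewrite (cent_brl _ _ C1) (cent_brl _ _ C2) (klinD (klin_brl _)).
by rewrite (cent_brr _ _ C1) (cent_brr _ _ C2) (klinD (klin_brr _)).
Qed.

Lemma Cspan0 s : Cspan s 0.
Proof.
by exists (fun _ => zmap); split => [j|]; [exact: cent_zero | rewrite big1].
Qed.

Lemma CspanD s x y : Cspan s x -> Cspan s y -> Cspan s (x + y).
Proof.
move=> [g1 [C1 ->]] [g2 [C2 ->]]; exists (fun j w => g1 j w + g2 j w); split.
  by move=> j; apply: cent_add.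
by rewrite -big_split.
Qed.

Lemma Cspan_sum (I : Type) (r : seq I) (F : I -> L) s :
  (forall i, Cspan s (F i)) -> Cspan s (\sum_(i <- r) F i).
Proof.
move=> H; elim: r => [|i r IH]; first by rewrite big_nil; apply: Cspan0.
by rewrite big_cons; apply: CspanD.
Qed.

Lemma Cspan_catl s t x : Cspan s x -> Cspan (s ++ t) x.
Proof.
move=> [g [Cg ->]]; exists (fun j => if (j < size s)%N then g j else zmap); split.
  by move=> j; case: ifP => _; [apply: Cg | apply: cent_zero].
rewrite size_cat [RHS](@big_cat_nat _ _ _ (size s)) ?leq_addr //=.
rewrite [X in _ = _ + X]big1_seq ?addr0; last first.
  by move=> j /andP [_]; rewrite mem_index_iota => /andP [] /=; rewrite leqNgt => /negbTE ->.
apply: eq_big_nat => j /andP [_ js]; by rewrite js nth_cat js.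
Qed.

Lemma Cspan_catr s t x : Cspan t x -> Cspan (s ++ t) x.
Proof.
move=> [g [Cg ->]]; exists (fun j => if (j < size s)%N then zmap else g (j - size s)%N); split.
  by move=> j; case: ifP => _; [apply: cent_zero | apply: Cg].
symmetry; rewrite size_cat (@big_cat_nat _ _ _ (size s) 0 (size s + size t)) ?leq_addr //=.
rewrite big1_seq ?add0r; last first.
  by move=> j /andP [_]; rewrite mem_index_iota => /andP [_ ->].
rewrite -{1}[size s]add0n big_addn addKn; apply: eq_big_nat => j _.
by rewrite ltnNge leq_addl /= addnK nth_cat ltnNge leq_addl /= addnK.
Qed.

Lemma Cspan_flatten (T : eqType) (F : T -> seq L) (idx : seq T) i x :
  i \in idx -> Cspan (F i) x -> Cspan (flatten (map F idx)) x.
Proof.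
elim: idx => [|j idx IH] //=; rewrite inE => /orP [/eqP <- H|iI H].
  exact: Cspan_catl.
by apply: Cspan_catr; apply: IH.
Qed.

Lemma Cspan_kspan s t (c : 'I_(size s) -> k) : in_centroid br t ->
  Cspan s (t (\sum_(i < size s) c i *: s`_i)).
Proof.
move=> Ct; exists (fun j w => oapp c 0 (insub j) *: t w); split.
  by move=> j; apply: cent_scale.
rewrite (klin_sum (cent_klin Ct)) big_mkord; apply: eq_bigr => i _.
by rewrite valK /= (klinZ (cent_klin Ct)).
Qed.

Lemma Cspan_ord s x : Cspan s x -> exists cs : 'I_(size s) -> L -> L,
  (forall i, in_centroid br (cs i)) /\ x = \sum_(i < size s) cs i s`_i.
Proof. by move=> [g [Cg ->]]; exists (fun i => g i); split => //; rewrite big_mkord. Qed.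

Definition d0 : L * P := (0, (0, 0)).

Definition KI (sl : seq (L * P)) := forall q0 (c : nat -> k),
  \sum_(0 <= j < size sl | (nth d0 sl j).2 == q0) c j *: (nth d0 sl j).1 = 0 ->
  forall j, (j < size sl)%N -> (nth d0 sl j).2 == q0 -> c j = 0.

Lemma KI_nil : KI [::]. Proof. by []. Qed.

Lemma KI_cat s1 s2 : KI s1 -> KI s2 ->
  (forall x y, x \in s1 -> y \in s2 -> x.2 != y.2) -> KI (s1 ++ s2).
Proof.
move=> K1 K2 dis q0 c; rewrite size_cat (@big_cat_nat _ _ _ (size s1)) ?leq_addr //=.
have A1 : \sum_(0 <= j < size s1 | (nth d0 (s1 ++ s2) j).2 == q0)
            c j *: (nth d0 (s1 ++ s2) j).1 =
          \sum_(0 <= j < size s1 | (nth d0 s1 j).2 == q0) c j *: (nth d0 s1 j).1.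
  apply: congr_big_nat => // j; first by case/andP => _ js; rewrite nth_cat js.
  by case/andP => _ /andP [_ js]; rewrite nth_cat js.
have A2 : \sum_(size s1 <= j < size s1 + size s2 | (nth d0 (s1 ++ s2) j).2 == q0)
            c j *: (nth d0 (s1 ++ s2) j).1 =
          \sum_(0 <= j < size s2 | (nth d0 s2 j).2 == q0)
            c (j + size s1)%N *: (nth d0 s2 j).1.
  rewrite -{1}[size s1]add0n big_addn addKn; apply: congr_big_nat => // j _.
    by rewrite nth_cat ltnNge leq_addl /= addnK.
  by rewrite nth_cat ltnNge leq_addl /= addnK.
rewrite A1 A2.
case: (boolP (has (fun x => x.2 == q0) s1)) => h1.
  have Z2 : \sum_(0 <= j < size s2 | (nth d0 s2 j).2 == q0)
              c (j + size s1)%N *: (nth d0 s2 j).1 = 0.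
    apply: big1_seq => j /andP [/eqP lj]; rewrite mem_index_iota => /andP [_ js].
    have [x xs /eqP lx] := hasP h1.
    by move: (dis x _ xs (mem_nth d0 js)); rewrite lx lj eqxx.
  rewrite Z2 addr0 => E j; rewrite nth_cat; case: ifP => js jlt lab.
    exact: K1 E j js lab.
  have [x xs /eqP lx] := hasP h1.
  have jm : (j - size s1 < size s2)%N.
    by rewrite ltn_subLR ?jlt // leqNgt js.
  by move: (dis x _ xs (mem_nth d0 jm)); rewrite lx (eqP lab) eqxx.
have Z1 : \sum_(0 <= j < size s1 | (nth d0 s1 j).2 == q0) c j *: (nth d0 s1 j).1 = 0.
  apply: big1_seq => j /andP [lj]; rewrite mem_index_iota => /andP [_ js].
  by move/hasPn: h1 => /(_ _ (mem_nth d0 js)); rewrite lj.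
rewrite Z1 add0r => E j; rewrite nth_cat; case: ifP => js jlt lab.
  by move/hasPn: h1 => /(_ _ (mem_nth d0 js)); rewrite lab.
have jm : (j - size s1 < size s2)%N by rewrite ltn_subLR ?jlt // leqNgt js.
have := K2 q0 (fun j => c (j + size s1)%N) E _ jm lab.
by rewrite subnK // leqNgt js.
Qed.

Lemma KI_block (s : seq L) q :
  (forall c : 'I_(size s) -> k, \sum_(i < size s) c i *: s`_i = 0 -> forall i, c i = 0) ->
  KI [seq (b, q) | b <- s].
Proof.
move=> Ind q0 c; rewrite size_map => E j js lab.
have lq : q == q0 by move: lab; rewrite (nth_map 0) //.
have E' : \sum_(i < size s) c i *: s`_i = 0.
  rewrite -(big_mkord xpredT (fun i => c i *: s`_i)) -[RHS]E; apply: congr_big_nat => // i.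
    by case/andP => _ iS; rewrite (nth_map 0) // lq.
  by case/andP => _ /andP [_ iS]; rewrite (nth_map 0).
exact: (Ind (fun i => c i) E' (Ordinal js)).
Qed.

Lemma KI_flatten (T : eqType) (idx : seq T) (F : T -> seq (L * P)) (h : P -> T) :
  uniq idx -> (forall i, i \in idx -> KI (F i)) ->
  (forall i x, i \in idx -> x \in F i -> h x.2 = i) ->
  KI (flatten (map F idx)).
Proof.
elim: idx => [|i idx IH] //= /andP [ni ui] K Hh.
apply: KI_cat; first by apply: K; rewrite mem_head.
  apply: IH => //; first by move=> j ji; apply: K; rewrite inE ji orbT.
  by move=> j x ji xj; apply: Hh => //; rewrite inE ji orbT.
move=> x y xi /flattenP [s' /mapP [j ji ->] yj]; apply/negP => /eqP E.
have hx := Hh i x (mem_head _ _) xi.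
have hy : h y.2 = j by apply: Hh => //; rewrite inE ji orbT.
by move: ni; rewrite -hx E hy ji.
Qed.


Section Reps.
Variables (m : nat) (reps : 'I_m.+1 -> Lam).
Hypothesis Hreps : coset_reps br G reps.

Lemma reps_inj : injective reps.
Proof.
move=> i j E; case: Hreps => _ [_ H]; apply: H; rewrite E subrr; exact: Gamma0.
Qed.

Lemma INDEP (sl : seq (L * P)) :
  (forall x, x \in sl -> Gp x.2 x.1) -> (forall x, x \in sl -> exists i, x.2.2 = reps i) ->
  KI sl ->
  forall cs : 'I_(size (map fst sl)) -> L -> L, (forall i, in_centroid br (cs i)) ->
  \sum_(i < size (map fst sl)) cs i (map fst sl)`_i = 0 -> forall i y, cs i y = 0.
Proof.
move=> H1 H2 K cs Ccs E i0; apply: (recon (Ccs i0)) => g y.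
have szN : size (map fst sl) = size sl by rewrite size_map.
have el : forall i : 'I_(size (map fst sl)), (map fst sl)`_i = (nth d0 sl i).1.
  by move=> i; rewrite (nth_map d0) // -szN.
have mem : forall i : 'I_(size (map fst sl)), nth d0 sl i \in sl.
  by move=> i; apply: mem_nth; rewrite -szN.
case: (boolP (holds (in_Gamma br G g))) => [/holdsP [t [Ct tn]]|/negP nG]; last first.
  apply: NNPP => ne; apply: nG; apply/holdsP; exists (cpart (cs i0) g); split.
    exact: cpart_Cdeg.
  by exists y.
have [sc Hsc] : exists sc : 'I_(size (map fst sl)) -> k,
    forall i y, cpart (cs i) g y = sc i *: t y.
  apply: (@fin_all_exists _ (fun _ => k) (fun i s => forall y, cpart (cs i) g y = s *: t y)) => i.
  have [s Hs] := C1 Ct tn (cpart_Cdeg g (Ccs i)); by exists s.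
set q0 := (nth d0 sl i0).2.
have [i_0 Hi0] := H2 _ (mem i0).
have VAN : forall i : 'I_(size (map fst sl)), (nth d0 sl i).2 != q0 ->
    comp (q0.1, q0.2 + g) (cs i (map fst sl)`_i) = 0.
  move=> i ne; rewrite el; have Gi := H1 _ (mem i).
  set li := (nth d0 sl i).2 in ne Gi.
  case: (eqVneq q0.1 li.1) => e1; last by have Gi' : G li.1 li.2 (nth d0 sl i).1 := Gi; exact: (Rpres (Ccs i) Gi' (p := (q0.1, q0.2 + g)) e1).
  have -> : (q0.1, q0.2 + g) = (li.1, li.2 + (q0.2 + g - li.2)).
    by rewrite e1 [li.2 + _]addrC subrK.
  rewrite -(cpart_hom _ (Ccs i) Gi); apply: NNPP => nz0.
  have Gd : in_Gamma br G (q0.2 + g - li.2).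
    by exists (cpart (cs i) (q0.2 + g - li.2)); split; [apply: cpart_Cdeg | exists (nth d0 sl i).1].
  have := Gamma_sub Gd (ex_intro _ t (conj Ct tn)).
  have [j Hj] := H2 _ (mem i).
  rewrite addrAC addrK /q0 /li Hj Hi0 => /(proj2 (proj2 Hreps)) ij.
  have E2 : li.2 = q0.2 by rewrite /li /q0 Hj Hi0 ij.
  by move: ne; rewrite [li]surjective_pairing [q0]surjective_pairing -e1 E2 eqxx.
pose c' (j : nat) := oapp sc 0 (insub j).
have S0 : \sum_(0 <= j < size sl | (nth d0 sl j).2 == q0) c' j *: (nth d0 sl j).1 = 0.
  apply: (Cdeg_inj Ct tn); rewrite (klin_sum (cent_klin (Cdeg_cent Ct))).
  rewrite -szN big_mkord.
  rewrite (eq_bigr (fun i : 'I_(size (map fst sl)) =>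
     comp (q0.1, q0.2 + g) (cs i (map fst sl)`_i))); last first.
    move=> i /eqP lq; rewrite /c' valK /= (klinZ (cent_klin (Cdeg_cent Ct))) -Hsc el.
    by rewrite (cpart_hom _ (Ccs i) (H1 _ (mem i))) lq.
  rewrite (big_mkcond (fun i : 'I_(size (map fst sl)) => (nth d0 sl i).2 == q0)).
  rewrite (eq_bigr (fun i : 'I_(size (map fst sl)) =>
     comp (q0.1, q0.2 + g) (cs i (map fst sl)`_i))); last first.
    by move=> i _; case: ifP => // /negbT /VAN ->.
  by rewrite -(klin_sum (comp_lin _)) E comp0.
have := K q0 c' S0 i0; rewrite -szN ltn_ord eqxx /c' valK /= => /(_ isT isT) s0.
by rewrite Hsc s0 scale0r.
Qed.


Variable Bs : V -> 'I_m.+1 -> seq L.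
Hypothesis Hbasis : forall a i, a \in D -> k_basis (G a (reps i)) (Bs a i).

Definition lblock a i := [seq (b, (a, reps i)) | b <- Bs a i].
Definition lalpha a :=
  if a \in D then flatten [seq lblock a i | i <- enum 'I_m.+1] else [::].
Definition lall := flatten [seq lalpha a | a <- D].

Lemma map_fst_pair (s : seq L) (q : P) : map fst [seq (b, q) | b <- s] = s.
Proof. by elim: s => //= b s ->. Qed.

Lemma lalpha_fst a : map fst (lalpha a) = Balpha D Bs a.
Proof.
rewrite /lalpha /Balpha; case: ifP => // _; rewrite map_flatten -map_comp.
by congr flatten; apply: eq_map => i /=; rewrite map_fst_pair.
Qed.

Lemma lall_fst : map fst lall = Ball D Bs.
Proof.
rewrite /lall /Ball map_flatten -map_comp.
by congr flatten; apply: eq_map => a /=; rewrite lalpha_fst.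
Qed.

Lemma lalpha_mem a x : x \in lalpha a ->
  a \in D /\ exists i, x.2 = (a, reps i) /\ x.1 \in Bs a i.
Proof.
rewrite /lalpha; case: ifP => aD //.
move/flattenP => [s /mapP [i _ ->] /mapP [b bi ->]]; split => //; by exists i.
Qed.

Lemma lalpha_G a x : x \in lalpha a -> Gp x.2 x.1.
Proof.
move/lalpha_mem => [aD [i [-> xi]]]; have [H _] := Hbasis i aD; exact: H.
Qed.

Lemma lall_mem x : x \in lall -> exists a, a \in D /\ x \in lalpha a.
Proof. by move/flattenP => [s /mapP [a aD ->] xs]; exists a. Qed.

Lemma KI_lalpha a : KI (lalpha a).
Proof.
rewrite /lalpha; case: ifP => aD //.
apply: (@KI_flatten _ _ _ (fun p => odflt ord0 [pick i | reps i == p.2])).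
- exact: enum_uniq.
- move=> i _; apply: KI_block; by have [_ [_ H]] := Hbasis i aD.
- move=> i x _ /mapP [b _ ->] /=.
  case: pickP => [j /eqP /reps_inj -> //|/(_ i)]; by rewrite eqxx.
Qed.

Lemma KI_lall : KI lall.
Proof.
apply: (@KI_flatten _ _ _ fst); first exact: D_uniq.
  by move=> a _; apply: KI_lalpha.
by move=> a x _ /lalpha_mem [_ [i [-> _]]].
Qed.

Lemma span_piece a l y : a \in D -> G a l y -> Cspan (Balpha D Bs a) y.
Proof.
move=> aD Gy; case: Hreps => _ [Hcos _]; have [i [t [Ct tn]]] := Hcos l.
have [z Ez] := Cdeg_surj Ct tn y.
have Gz : G a (reps i) z.
  apply: (comp_hom_of (q := (a, reps i))); case=> p1 p2 pq; apply: (Cdeg_inj Ct tn).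
  rewrite -(comp_shift p1 p2 z Ct) -Ez (comp_hom (q := (a, l)) Gy).
  case: eqP => // [[e1 e2]]; move: pq; rewrite e1.
  have -> : p2 = reps i by rewrite -[p2](addrK (l - reps i)) e2 opprB addrC subrK.
  by rewrite eqxx.
have [_ [Hsp _]] := Hbasis i aD; have [c Ec] := Hsp z Gz.
rewrite /Balpha aD Ez Ec; apply: (@Cspan_flatten _ (Bs a) _ i); first by rewrite mem_enum.
exact: Cspan_kspan (Cdeg_cent Ct).
Qed.

Lemma span_root a x : a \in D -> Lroot G a x -> Cspan (Balpha D Bs a) x.
Proof.
by move=> aD [s [f [Hf ->]]]; apply: Cspan_sum => l; apply: span_piece (Hf l).
Qed.

Lemma span_all x : Cspan (Ball D Bs) x.
Proof.
rewrite [x]comp_sum; apply: Cspan_sum => r.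
case: (boolP (r.1 \in D)) => rD.
  by apply: (@Cspan_flatten _ (Balpha D Bs) _ r.1) => //; apply: span_piece (compG r x).
have -> : comp r x = 0.
  apply: NNPP => ne; move/negP: rD; apply; exact: Lroot_D (G_Lroot (compG r x)) ne.
exact: Cspan0.
Qed.

Lemma main_result :
  (forall a, inQ D a ->
     (forall c x, in_centroid br c -> Lroot G a x -> Lroot G a (c x)) /\
     centroid_basis br (Lroot G a) (Balpha D Bs a) /\
     (forall b, b \in Balpha D Bs a -> exists l, Ldeg G l b)) /\
  (centroid_basis br (fun _ => True) (Ball D Bs) /\
   (forall b, b \in Ball D Bs -> exists a l, G a l b)).
Proof.
have memB : forall a b, b \in Balpha D Bs a -> exists i, G a (reps i) b.
  move=> a b; rewrite -lalpha_fst => /mapP [x xa ->].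
  have [_ [i [E _]]] := lalpha_mem xa; exists i; have := lalpha_G xa; by rewrite E.
split.
  move=> a aQ; split; first by move=> c x Cc; apply: Rroot.
  split; last by move=> b /memB [i Gb]; exists (reps i); apply: G_Ldeg Gb.
  split; first by move=> b /memB [i Gb]; apply: G_Lroot Gb.
  split.
    move=> x Lx; case: (boolP (a \in D)) => aD; first exact: Cspan_ord (span_root aD Lx).
    have -> : x = 0 by apply: NNPP => ne; move/negP: aD; apply; exact: Lroot_D Lx ne.
    exact: Cspan_ord (Cspan0 _).
  rewrite -lalpha_fst; apply: INDEP.
  - exact: lalpha_G.
  - by move=> x /lalpha_mem [_ [i [-> _]]]; exists i.
  - exact: KI_lalpha.
split.
  split => //; split; first by move=> x _; apply: Cspan_ord (span_all x).
  rewrite -lall_fst; apply: INDEP.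
  - by move=> x /lall_mem [a [_ xa]]; apply: lalpha_G xa.
  - by move=> x /lall_mem [a [_ /lalpha_mem [_ [i [-> _]]]]]; exists i.
  - exact: KI_lall.
move=> b; rewrite /Ball => /flattenP [s /mapP [a _ ->] /memB [i Gb]].
by exists a, (reps i).
Qed.

End Reps.

End Main.

Unset Implicit Arguments.
Set Strict Implicit.

Theorem proposition5p1 (k : fieldType) (V : vectType k) (L : lmodType k) (n : nat)
    (br : L -> L -> L) (G : V -> 'rV[int]_n -> L -> Prop) (D : seq V)
    (cor : V -> V -> k) (m : nat) (reps : 'I_m.+1 -> 'rV[int]_n)
    (Bs : V -> 'I_m.+1 -> seq L) :
  [pchar k] =i pred0 ->
  is_Lie_torus br G D cor -> fgc br -> centreless br ->
  coset_reps br G reps ->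
  (forall a i, a \in D -> k_basis (G a (reps i)) (Bs a i)) ->
  (forall a, inQ D a ->
     (forall c x, in_centroid br c -> Lroot G a x -> Lroot G a (c x)) /\
     centroid_basis br (Lroot G a) (Balpha D Bs a) /\
     (forall b, b \in Balpha D Bs a -> exists l, Ldeg G l b)) /\
  (centroid_basis br (fun _ => True) (Ball D Bs) /\
   (forall b, b \in Ball D Bs -> exists a l, G a l b)).
Proof.
move=> ch LT _ cl rp bs; exact: (main_result ch LT cl rp bs).
Qed.
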